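(* If $P$ is a closed term of sort $(k,l)$ then $P^\star$ has sort $(l,k)$. Moreover $P\xrightarrow[\vec b]{\vec a}R$ if and only if $P^\star\xrightarrow[\vec a^\star]{\vec b^\star}R^\star$, where $\vec a^\star$ denotes the reversal of the word $\vec a$. Consequently, for closed terms $P,Q$ of the same sort, $P\sim Q$ if and only if $P^\star\sim Q^\star$.
   Context: Wire calculus. Fix a set $\Sigma$ of signals and $\iota\notin\Sigma$; $L=\Sigma\cup\{\iota\}$; $\vec\iota$ denotes a word of $\iota$'s. Prefix strings are words over atoms: signal variables $x$, binders $\lambda x$, $\iota$, constants $\sigma\in\Sigma$. Terms: $P::= Y \mid P\mathrel{;}P\mid P\otimes P\mid \frac{u}{v}.P\mid P+P\mid \mu Y{:}\tau.P$ ($\tau$ a sort $(k,l)$). In $\frac{u}{v}.P$, variables $x$ with $\lambda x$ in $uv$ are bound (set $bd$). Sorting: $Y$ has its declared sort; $P:(k,n),R:(n,l)\Rightarrow P\mathrel{;}R:(k,l)$; $P:(k,l),Q:(m,n)\Rightarrow P\otimes Q:(k+m,l+n)$; $\frac{u}{v}.P:(|u|,|v|)$ when $P$ has that sort (free variables of $uv$ in context, disjoint from $bd$); $\mu Y{:}\tau.P:\tau$ when $P:\tau$ assuming $Y{:}\tau$; $P+Q:\tau$ for $P,Q:\tau$. Closed terms only, up to renaming of bound variables. Transitions $P\xrightarrow[\vec b]{\vec a}Q$ (upper label $\vec a$, lower label $\vec b$, words over $L$) are generated by: (Refl) $P\xrightarrow[\vec\iota]{\vec\iota}P$; ($\iota$L)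 $P\xrightarrow[\vec\iota]{\vec\iota}R\xrightarrow[\vec b]{\vec a}Q$ gives $P\xrightarrow[\vec b]{\vec a}Q$; ($\iota$R) $P\xrightarrow[\vec b]{\vec a}R\xrightarrow[\vec\iota]{\vec\iota}Q$ gives $P\xrightarrow[\vec b]{\vec a}Q$; (Cut) $P\xrightarrow[\vec c]{\vec a}Q$, $R\xrightarrow[\vec b]{\vec c}S$ give $P\mathrel{;}R\xrightarrow[\vec b]{\vec a}Q\mathrel{;}S$; (Ten) $P\xrightarrow[\vec b]{\vec a}Q$, $R\xrightarrow[\vec d]{\vec c}S$ give $P\otimes R\xrightarrow[\vec b\vec d]{\vec a\vec c}Q\otimes S$; (Pref) for each $\sigma:bd\to L$, $\frac{u}{v}.P\xrightarrow[v|_\sigma]{u|_\sigma}P|_\sigma$; (Rec) $P[\mu Y.P/Y]\xrightarrow[\vec b]{\vec a}Q$ gives $\mu Y.P\xrightarrow[\vec b]{\vec a}Q$; ($+\iota$) $P\xrightarrow[\vec\iota]{\vec\iota}Q$, $R\xrightarrow[\vec\iota]{\vec\iota}S$ give $P+R\xrightarrow[\vec\iota]{\vec\iota}Q+S$; ($+$L/R) $P\xrightarrow[\vec b]{\vec a}Q$ with $\vec a\vec b$ not all $\iota$ gives $P+R\xrightarrow[\vec b]{\vec a}Q$ and $R+P\xrightarrow[\vec b]{\vec a}Q$. Bisimilarity $\sim$: $P\sim Q$ iff some relation $S\ni(P,Q)$ satisfies: if $(P',Q')\in S$ and $P'\xrightarrow[\vec b]{\vec a}P''$ then $Q'\xrightarrow[\vec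 b]{\vec a}Q''$ with $(P'',Q'')\in S$, and symmetrically. The operation $(-)^\star$: on prefix strings it is string reversal (letters being the atoms); on terms it is defined by structural recursion: $Y^\star=Y$, $(R\mathrel{;}S)^\star=S^\star\mathrel{;}R^\star$, $(R\otimes S)^\star=S^\star\otimes R^\star$, $(\frac{u}{v}.R)^\star=\frac{v^\star}{u^\star}.R^\star$, $(R+S)^\star=R^\star+S^\star$, $(\mu Y.R)^\star=\mu Y.R^\star$. *)

(* Defs.v *)
From mathcomp Require Import all_boot.

Set Implicit Arguments.
Unset Strict Implicit.
Unset Printing Implicit Defensive.

(* Labels: L = Sigma + {iota}; iota is None, a signal s is Some s. *)
Definition label (Sig : Type) := option Sig.
Definition is_iota {Sig : Type} (x : label Sig) : bool :=
  if x is None then true else false.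
Definition iotas {Sig : Type} (w : seq (label Sig)) : bool := all is_iota w.

Definition svar := nat.
Definition rvar := nat.
Definition sort := (nat * nat)%type.

Inductive atom (Sig : Type) : Type :=
| AVar : svar -> atom Sig
| ALam : svar -> atom Sig
| AIota : atom Sig
| ASig : Sig -> atom Sig.
Arguments AVar {Sig}. Arguments ALam {Sig}. Arguments AIota {Sig}. Arguments ASig {Sig}.

Inductive term (Sig : Type) : Type :=
| TVar : rvar -> term Sig
| TSeq : term Sig -> term Sig -> term Sig
| TTen : term Sig -> term Sig -> term Sig
| TPre : seq (atom Sig) -> seq (atom Sig) -> term Sig -> term Sig
| TSum : term Sig -> term Sig -> term Sig
| TMu  : rvar -> sort -> term Sig -> term Sig.
Arguments TVar {Sig}.

Definition lam_vars {Sig : Type} (w : seq (atom Sig)) : seq svar :=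
  flatten (map (fun a => if a is ALam x then [:: x] else [::]) w).
Definition bd {Sig : Type} (u v : seq (atom Sig)) : seq svar := lam_vars (u ++ v).

Definition var_occs {Sig : Type} (w : seq (atom Sig)) : seq svar :=
  flatten (map (fun a => if a is AVar x then [:: x] else [::]) w).
Definition fv_prefix {Sig : Type} (u v : seq (atom Sig)) : seq svar :=
  [seq x <- var_occs (u ++ v) | x \notin bd u v].

(* Sorting judgement: Gamma = signal variables in context,
   Delta = declared sorts of recursion variables. *)
Definition rctx := rvar -> option sort.
Definition rext (D : rctx) (Y : rvar) (t : sort) : rctx :=
  fun Z => if Z == Y then Some t else D Z.

Inductive sorted {Sig : Type} : seq svar -> rctx -> term Sig -> sort -> Prop :=
| S_Var G D Y t : D Y = Some t -> sorted G D (TVar Y) t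
| S_Seq G D P R k n l :
    sorted G D P (k, n) -> sorted G D R (n, l) -> sorted G D (TSeq P R) (k, l)
| S_Ten G D P Q k l m n :
    sorted G D P (k, l) -> sorted G D Q (m, n) ->
    sorted G D (TTen P Q) (k + m, l + n)
| S_Pre G D u v P :
    {subset fv_prefix u v <= G} ->
    all (fun x => x \notin bd u v) G ->
    sorted (G ++ bd u v) D P (size u, size v) ->
    sorted G D (TPre u v P) (size u, size v)
| S_Mu G D Y t P :
    sorted G (rext D Y t) P t -> sorted G D (TMu Y t P) t
| S_Sum G D P Q t :
    sorted G D P t -> sorted G D Q t -> sorted G D (TSum P Q) t.

Definition csorted {Sig : Type} (P : term Sig) (t : sort) : Prop :=
  sorted [::] (fun _ => None) P t.

(* Substitution of labels for signal variables:  P|_sigma,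
   sigma a partial map (defined exactly on the variables to replace). *)
Definition atom_of_label {Sig : Type} (l : label Sig) : atom Sig :=
  if l is Some s then ASig s else AIota.

Definition satom {Sig : Type} (s : svar -> option (label Sig)) (a : atom Sig)
  : atom Sig :=
  match a with
  | AVar x => if s x is Some l then atom_of_label l else AVar x
  | _ => a
  end.

Definition srestrict {Sig : Type} (s : svar -> option (label Sig)) (b : seq svar)
  : svar -> option (label Sig) :=
  fun x => if x \in b then None else s x.

Fixpoint ssubst {Sig : Type} (s : svar -> option (label Sig)) (P : term Sig)
  : term Sig :=
  match P with
  | TVar Y => TVar Y
  | TSeq P1 P2 => TSeq (ssubst s P1) (ssubst s P2)
  | TTen P1 P2 => TTen (ssubst s P1) (ssubst s P2)
  | TPre u v P1 =>
      let s' := srestrict s (bd u v) in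
      TPre (map (satom s') u) (map (satom s') v) (ssubst s' P1)
  | TSum P1 P2 => TSum (ssubst s P1) (ssubst s P2)
  | TMu Y t P1 => TMu Y t (ssubst s P1)
  end.

(* u|_sigma for the prefix being fired, sigma : bd -> L given by f
   (only its values on bd matter for closed terms) *)
Definition lab_atom {Sig : Type} (f : svar -> label Sig) (a : atom Sig) : label Sig :=
  match a with
  | AVar x => f x
  | ALam x => f x
  | AIota => None
  | ASig s => Some s
  end.
Definition lab {Sig : Type} (f : svar -> label Sig) (w : seq (atom Sig))
  : seq (label Sig) := map (lab_atom f) w.

Definition sigma_on {Sig : Type} (f : svar -> label Sig) (b : seq svar)
  : svar -> option (label Sig) :=
  fun x => if x \in b then Some (f x) else None.

(* Substitution of a (closed) term N for recursion variable Y: P[N/Y] *)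
Fixpoint rsubst {Sig : Type} (Y : rvar) (N : term Sig) (P : term Sig) : term Sig :=
  match P with
  | TVar Z => if Z == Y then N else TVar Z
  | TSeq P1 P2 => TSeq (rsubst Y N P1) (rsubst Y N P2)
  | TTen P1 P2 => TTen (rsubst Y N P1) (rsubst Y N P2)
  | TPre u v P1 => TPre u v (rsubst Y N P1)
  | TSum P1 P2 => TSum (rsubst Y N P1) (rsubst Y N P2)
  | TMu Z t P1 => if Z == Y then TMu Z t P1 else TMu Z t (rsubst Y N P1)
  end.

(* Transitions  trans P a b Q  :  P --a (upper) / b (lower)--> Q *)
Inductive trans {Sig : Type} : term Sig -> seq (label Sig) -> seq (label Sig) ->
    term Sig -> Prop :=
| T_Refl P a b : iotas a -> iotas b -> trans P a b P
| T_IotaL P R Q a' b' a b :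
    iotas a' -> iotas b' -> trans P a' b' R -> trans R a b Q -> trans P a b Q
| T_IotaR P R Q a' b' a b :
    iotas a' -> iotas b' -> trans P a b R -> trans R a' b' Q -> trans P a b Q
| T_Cut P Q R S0 a b c :
    trans P a c Q -> trans R c b S0 -> trans (TSeq P R) a b (TSeq Q S0)
| T_Ten P Q R S0 a b c d :
    trans P a b Q -> trans R c d S0 -> trans (TTen P R) (a ++ c) (b ++ d) (TTen Q S0)
| T_Pre u v P (f : svar -> label Sig) :
    trans (TPre u v P) (lab f u) (lab f v) (ssubst (sigma_on f (bd u v)) P)
| T_Rec Y t P a b Q :
    trans (rsubst Y (TMu Y t P) P) a b Q -> trans (TMu Y t P) a b Q
| T_SumIota P Q R S0 a b :
    iotas a -> iotas b -> trans P a b Q -> trans R a b S0 ->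
    trans (TSum P R) a b (TSum Q S0)
| T_SumL P R Q a b :
    ~~ iotas (a ++ b) -> trans P a b Q -> trans (TSum P R) a b Q
| T_SumR P R Q a b :
    ~~ iotas (a ++ b) -> trans P a b Q -> trans (TSum R P) a b Q.

Definition bisimulation {Sig : Type} (Rel : term Sig -> term Sig -> Prop) : Prop :=
  forall P' Q', Rel P' Q' ->
    (forall a b P'', trans P' a b P'' -> exists2 Q'', trans Q' a b Q'' & Rel P'' Q'') /\
    (forall a b Q'', trans Q' a b Q'' -> exists2 P'', trans P' a b P'' & Rel P'' Q'').

Definition bisim {Sig : Type} (P Q : term Sig) : Prop :=
  exists Rel : term Sig -> term Sig -> Prop, Rel P Q /\ bisimulation Rel.

Fixpoint star {Sig : Type} (P : term Sig) : term Sig :=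
  match P with
  | TVar Y => TVar Y
  | TSeq R R2 => TSeq (star R2) (star R)
  | TTen R R2 => TTen (star R2) (star R)
  | TPre u v R => TPre (rev v) (rev u) (star R)
  | TSum R R2 => TSum (star R) (star R2)
  | TMu Y t R => TMu Y (t.2, t.1) (star R)
  end.

(* Main.v *)
From Stdlib Require Import FunctionalExtensionality.
Require Import Defs.
From mathcomp Require Import all_boot.

Set Implicit Arguments.
Unset Strict Implicit.

Section Aux.
Variable Sig : Type.

Lemma lam_vars_cat (w1 w2 : seq (atom Sig)) :
  lam_vars (w1 ++ w2) = lam_vars w1 ++ lam_vars w2.
Proof. by rewrite /lam_vars map_cat flatten_cat. Qed.

Lemma lam_vars_rev (w : seq (atom Sig)) : lam_vars (rev w) = rev (lam_vars w).
Proof.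
elim: w => [|a w IH] //.
rewrite rev_cons -cats1 lam_vars_cat IH.
rewrite -cat1s lam_vars_cat.
by rewrite rev_cat; case: a => [x|x||x] //=; rewrite /= ?cats0.
Qed.

Lemma var_occs_cat (w1 w2 : seq (atom Sig)) :
  var_occs (w1 ++ w2) = var_occs w1 ++ var_occs w2.
Proof. by rewrite /var_occs map_cat flatten_cat. Qed.

Lemma var_occs_rev (w : seq (atom Sig)) : var_occs (rev w) = rev (var_occs w).
Proof.
elim: w => [|a w IH] //.
rewrite rev_cons -cats1 var_occs_cat IH.
rewrite -cat1s var_occs_cat.
by rewrite rev_cat; case: a => [x|x||x] //=; rewrite /= ?cats0.
Qed.

Lemma bd_rev (u v : seq (atom Sig)) : bd (rev v) (rev u) = rev (bd u v).
Proof. by rewrite /bd -rev_cat lam_vars_rev. Qed.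

Lemma fv_rev (u v : seq (atom Sig)) :
  fv_prefix (rev v) (rev u) = rev (fv_prefix u v).
Proof.
rewrite /fv_prefix bd_rev -rev_cat var_occs_rev filter_rev.
congr rev; apply: eq_filter => x; by rewrite mem_rev.
Qed.

Definition swp (t : Defs.sort) : Defs.sort := (t.2, t.1).

Lemma star_sorted G D (P : term Sig) t :
  Defs.sorted G D P t -> forall G' D', G =i G' ->
  (forall Y, D' Y = omap swp (D Y)) -> Defs.sorted G' D' (star P) (t.2, t.1).
Proof.
elim => {G D P t}.
- move=> G D Y t HY G' D' _ HD /=; constructor; by rewrite HD HY.
- move=> G D P R k n l _ IH1 _ IH2 G' D' HG HD /=.
  by apply: (S_Seq (n:=n)); [apply: IH2 | apply: IH1].
- move=> G D P Q k l m n _ IH1 _ IH2 G' D' HG HD /=.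
  rewrite [l + n]addnC [k + m]addnC.
  by apply: S_Ten; [apply: IH2 | apply: IH1].
- move=> G D u v P Hfv Hall _ IH G' D' HG HD /=.
  rewrite -(size_rev v) -(size_rev u).
  apply: S_Pre.
  + move=> x; rewrite fv_rev mem_rev -HG; exact: Hfv.
  + apply/allP => x; rewrite -HG bd_rev mem_rev => Hx.
    exact: (allP Hall x Hx).
  + have := IH (G' ++ bd (rev v) (rev u)) D'.
    rewrite !size_rev; apply => //.
    by move=> x; rewrite !mem_cat bd_rev mem_rev HG.
- move=> G D Y t P _ IH G' D' HG HD /=.
  apply: S_Mu; apply: IH => // Z.
  by rewrite /rext; case: (Z == Y).
- move=> G D P Q t _ IH1 _ IH2 G' D' HG HD /=.
  by apply: S_Sum; [apply: IH1 | apply: IH2].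
Qed.

Lemma star_star (P : term Sig) : star (star P) = P.
Proof.
elim: P => //=.
- by move=> P1 -> P2 ->.
- by move=> P1 -> P2 ->.
- by move=> u v P ->; rewrite !revK.
- by move=> P1 -> P2 ->.
- by move=> Y [t1 t2] P ->.
Qed.

Lemma srestrict_rev (s : svar -> option (label Sig)) b :
  srestrict s (rev b) = srestrict s b.
Proof. apply: functional_extensionality => x; by rewrite /srestrict mem_rev. Qed.

Lemma sigma_on_rev (f : svar -> label Sig) b :
  sigma_on f (rev b) = sigma_on f b.
Proof. apply: functional_extensionality => x; by rewrite /sigma_on mem_rev. Qed.

Lemma star_ssubst (P : term Sig) s : star (ssubst s P) = ssubst s (star P).
Proof.
elim: P s => //=.
- by move=> P1 IH1 P2 IH2 s; rewrite IH1 IH2.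
- by move=> P1 IH1 P2 IH2 s; rewrite IH1 IH2.
- by move=> u v P IH s; rewrite IH bd_rev srestrict_rev !map_rev.
- by move=> P1 IH1 P2 IH2 s; rewrite IH1 IH2.
- by move=> Y t P IH s; rewrite IH.
Qed.

Lemma star_rsubst (P : term Sig) Y N :
  star (rsubst Y N P) = rsubst Y (star N) (star P).
Proof.
elim: P => //=.
- by move=> Z; case: (Z == Y).
- by move=> P1 -> P2 ->.
- by move=> P1 -> P2 ->.
- by move=> u v P ->.
- by move=> P1 -> P2 ->.
- by move=> Z t P IH; case: (Z == Y) => //=; rewrite IH.
Qed.

Lemma iotas_rev (a : seq (label Sig)) : iotas (rev a) = iotas a.
Proof. by rewrite /iotas all_rev. Qed.

Lemma star_trans (P : term Sig) a b R :
  trans P a b R -> trans (star P) (rev b) (rev a) (star R).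
Proof.
elim => {P a b R}.
- move=> P a b Ha Hb; apply: T_Refl; by rewrite iotas_rev.
- move=> P R Q a' b' a b Ha Hb _ IH1 _ IH2.
  apply: T_IotaL IH1 IH2; by rewrite iotas_rev.
- move=> P R Q a' b' a b Ha Hb _ IH1 _ IH2.
  apply: T_IotaR IH1 IH2; by rewrite iotas_rev.
- move=> P Q R S0 a b c _ IH1 _ IH2 /=; exact: T_Cut IH2 IH1.
- move=> P Q R S0 a b c d _ IH1 _ IH2 /=; rewrite !rev_cat; exact: T_Ten.
- move=> u v P f /=.
  rewrite star_ssubst -(sigma_on_rev f (bd u v)) -bd_rev /lab -!map_rev.
  exact: T_Pre.
- move=> Y t P a b Q _ IH /=; apply: T_Rec.
  by rewrite star_rsubst in IH.
- move=> P Q R S0 a b Ha Hb _ IH1 _ IH2 /=.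
  apply: T_SumIota => //; by rewrite iotas_rev.
- move=> P R Q a b Hn _ IH /=; apply: T_SumL => //.
  by rewrite -rev_cat iotas_rev.
- move=> P R Q a b Hn _ IH /=; apply: T_SumR => //.
  by rewrite -rev_cat iotas_rev.
Qed.

Lemma star_trans_iff (P : term Sig) a b R :
  trans P a b R <-> trans (star P) (rev b) (rev a) (star R).
Proof.
split; first exact: star_trans.
move/star_trans; by rewrite !star_star !revK.
Qed.

Lemma bisim_star (P Q : term Sig) : bisim P Q -> bisim (star P) (star Q).
Proof.
case=> Rel [HPQ HB].
exists (fun X Y => Rel (star X) (star Y)); split; first by rewrite !star_star.
move=> X Y HXY; have [H1 H2] := HB _ _ HXY; split.
- move=> a b X'' /star_trans Ht.
  have [Q'' HQ HR] := H1 _ _ _ Ht.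
  exists (star Q''); last by rewrite star_star.
  by move: HQ => /star_trans; rewrite star_star !revK.
- move=> a b Y'' /star_trans Ht.
  have [P'' HP HR] := H2 _ _ _ Ht.
  exists (star P''); last by rewrite star_star.
  by move: HP => /star_trans; rewrite star_star !revK.
Qed.

End Aux.

Theorem mainTheorem8 (Sig : Type) (P : term Sig) (k l : nat) :
  csorted P (k, l) ->
  csorted (star P) (l, k) /\
  (forall (a b : seq (label Sig)) (R : term Sig),
      trans P a b R <-> trans (star P) (rev b) (rev a) (star R)) /\
  (forall Q : term Sig, csorted Q (k, l) ->
      (bisim P Q <-> bisim (star P) (star Q))).
Proof.
move=> HP; split; first exact: (star_sorted HP).
split; first exact: star_trans_iff.
move=> Q _; split; first exact: bisim_star.
by move/bisim_star; rewrite !star_star.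
Qed.
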